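(* Fix positive reals $d_{close}<d_{min}\le d_{max}$ and $d_{open}>0$. (1) For every real $c$ with $0\le c<d_{open}$ there exist a regular run $R$ (with a single track) and reals $0\le\alpha<\beta$ with $\alpha+c<\beta-\Delta_{close}$ such that TrackStatus$(x)\ne$ incrossing over $(\alpha,\beta)$ for every track $x$, but GateStatus $\neq$ opened at some moment of $[\alpha+c,\,\beta-\Delta_{close}]$. (2) For every real $C<\Delta_{close}$ there exist a regular run $R$ (with a single track) and reals $0\le\alpha<\beta$ with $\alpha+d_{open}<\beta-C$ such that TrackStatus$(x)\ne$ incrossing over $(\alpha,\beta)$ for every track $x$, but GateStatus $\neq$ opened at some moment of $[\alpha+d_{open},\,\beta-C]$.
   Context: Setting (evolving algebra for the railroad crossing). States are structures over a vocabulary containing: a finite universe Tracks; the reals and ExtendedReals $=\mathbb{R}\cup\{\infty\}$ with standard $<$ and $+$ ($\infty$ largest); a nullary real-valued symbol $\mathrm{CT}$ (current time); positive real constants $d_{close},d_{open},d_{min},d_{max}$ with $d_{close}<d_{min}\le d_{max}$; a unary function TrackStatus from Tracks to $\{\text{empty},\text{coming},\text{incrossing}\}$; a unary function Deadline from Tracks to ExtendedReals; a nullary Dir with values in $\{\text{open},\text{close}\}$; a nullary GateStatus with values in $\{\text{opened},\text{closed}\}$. Put $W=d_{min}-d_{close}$ and $\Delta_{close}=d_{close}+(d_{max}-d_{min})=d_{max}-W$. For a track $x$, $s(x)$ is the condition [$\mathrm{TrackStatus}(x)=\text{empty}$ or $\mathrm{CT}+d_{open}<\mathrm{Deadline}(x)$],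 and SafeToOpen is $\forall x\in\mathrm{Tracks}\ s(x)$. The program has two modules (agents). Gate: simultaneously OpenGate ''if Dir=open then GateStatus:=opened'' and CloseGate ''if Dir=close then GateStatus:=closed''. Controller: simultaneously, for every track $x$, SetDeadline$(x)$ ''if TrackStatus$(x)$=coming and Deadline$(x)=\infty$ then Deadline$(x):=\mathrm{CT}+W$'', SignalClose$(x)$ ''if $\mathrm{CT}=$Deadline$(x)$ then Dir:=close'', ClearDeadline$(x)$ ''if TrackStatus$(x)$=empty and Deadline$(x)<\infty$ then Deadline$(x):=\infty$'', together with SignalOpen ''if Dir=close and SafeToOpen then Dir:=open''. Executing a module means computing all updates it generates in the current state and performing them simultaneously (nothing happens if the update set is inconsistent). A module is enabled at a state if its update set is consistent and contains an update that changes the state. TrackStatus is external (changed only by the environment); Deadline, Dir, GateStatus are internal (changed only by the modules); other symbols are static. Runs: for $t\mapsto R(t)$, $t\in[0,\infty)$, let $\rho(t)$ be the reduct of $R(t)$ without CT. $R$ is a pre-run if all $R(t)$ share a superuniverse, $\mathrm{CT}=t$ in $R(t)$, and for every $\tau>0$ there are $0=t_0<\dots<t_n=\tau$ with $\rho$ constant on each $(t_i,t_{i+1})$. For a term $e$ (free variables fixed), $e_t$ is its value in $R(t)$, $e_{t+}$ (resp. $e_{t-}$, $t>0$) its constant value on some $(t,t+\epsilon)$ (resp. $(t-\epsilon,t)$); likewise $\rho(t\pm)$. $e$ holds over an interval if it holds at each point; $e$ becomes (is set to) $a$ at $t$ if $e_{t-}\ne a=e_t$ or $e_t\neq a=e_{t+}$.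 A pre-run is a run if (i) whenever $\rho(t+)\neq\rho(t)$, $\rho(t+)$ is the CT-free reduct of the result of executing some modules at $R(t)$ (these agents fire at $t$), with external functions equal in $\rho(t)$ and $\rho(t+)$; (ii) whenever $t>0$ and $\rho(t)\ne\rho(t-)$, they differ only in external functions. An agent is immediate if it fires at every moment it is enabled; bounded if immediate or there is $b>0$ with no interval $(t,t+b)$ over which it is enabled but never fires. Initial states: TrackStatus$(x)$=empty and Deadline$(x)=\infty$ for every track $x$. A regular run is a run $R$ with $R(0)$ initial such that: (Train Motion) for each track $x$ there is a finite or infinite sequence $0=t_0<t_1<t_2<\cdots$ (the significant moments of $x$) with TrackStatus$(x)$=empty over each $[t_{3i},t_{3i+1})$, =coming over each $[t_{3i+1},t_{3i+2})$ where $d_{min}\le t_{3i+2}-t_{3i+1}\le d_{max}$, =incrossing over each $[t_{3i+2},t_{3i+3})$, and, if the sequence is finite with last element $t_k$, then $3\mid k$ and TrackStatus$(x)$=empty over $[t_k,\infty)$; (Controller Timing) Controller is immediate; (Gate Timing) Gate is bounded, there is no interval $(t,t+d_{close})$ over which Dir=close and GateStatus=opened both hold, and no interval $(t,t+d_{open})$ over which Dir=open and GateStatus=closed both hold. *)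

(* Defs.v *)
From Stdlib Require Import Reals Lra.
Open Scope R_scope.

Inductive TStatus := empty | coming | incrossing.
Inductive DirV := dopen_ | dclose_.
Inductive GateV := opened | closed.

Inductive ext := Fin (r : R) | Inf.

Definition ext_lt (a b : ext) : Prop :=
  match a, b with
  | Fin x, Fin y => x < y
  | Fin _, Inf => True
  | Inf, _ => False
  end.

Section Railroad.
Variable Track : Type.
Variables d_close d_open d_min d_max : R.

Definition W : R := d_min - d_close.
Definition Delta_close : R := d_close + (d_max - d_min).

(** CT-free reduct of a state (the superuniverse and static part are fixed). *)
Record State := mkState {
  TrackStatus : Track -> TStatus;
  Deadline : Track -> ext;
  Dir : DirV;
  GateStatus : GateV }.

Inductive loc := LDeadline (x : Track) | LDir | LGate.
Inductive val := VExt (e : ext) | VDir (d : DirV) | VGate (g : GateV).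

Definition get (s : State) (l : loc) : val :=
  match l with
  | LDeadline x => VExt (Deadline s x)
  | LDir => VDir (Dir s)
  | LGate => VGate (GateStatus s)
  end.

Definition updset := loc -> val -> Prop.

Definition consistent (U : updset) : Prop :=
  forall l v1 v2, U l v1 -> U l v2 -> v1 = v2.

(** [s'] is (the CT-free reduct of) the result of performing [U] at [s]:
    if [U] is inconsistent nothing happens. External TrackStatus is untouched. *)
Definition is_result (U : updset) (s s' : State) : Prop :=
  TrackStatus s' = TrackStatus s /\
  (consistent U ->
     (forall l v, U l v -> get s' l = v) /\
     (forall l, (forall v, ~ U l v) -> get s' l = get s l)) /\
  (~ consistent U -> s' = s).

Definition safe_track (s : State) (t : R) (x : Track) : Prop :=
  TrackStatus s x = empty \/ ext_lt (Fin (t + d_open)) (Deadline s x).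

Definition SafeToOpen (s : State) (t : R) : Prop :=
  forall x, safe_track s t x.

Definition gate_upd (s : State) : updset := fun l v =>
  (l = LGate /\ Dir s = dopen_ /\ v = VGate opened) \/
  (l = LGate /\ Dir s = dclose_ /\ v = VGate closed).

Definition ctrl_upd (s : State) (t : R) : updset := fun l v =>
  (exists x, l = LDeadline x /\ TrackStatus s x = coming /\ Deadline s x = Inf
             /\ v = VExt (Fin (t + W))) \/
  (exists x, l = LDir /\ Deadline s x = Fin t /\ v = VDir dclose_) \/
  (exists x, l = LDeadline x /\ TrackStatus s x = empty /\ ext_lt (Deadline s x) Inf
             /\ v = VExt Inf) \/
  (l = LDir /\ Dir s = dclose_ /\ SafeToOpen s t /\ v = VDir dopen_).

Inductive agent := Gate | Controller.

Definition agent_upd (a : agent) (s : State) (t : R) : updset :=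
  match a with Gate => gate_upd s | Controller => ctrl_upd s t end.

Definition exec_upd (S : agent -> Prop) (s : State) (t : R) : updset :=
  fun l v => exists a, S a /\ agent_upd a s t l v.

Definition enabled (a : agent) (s : State) (t : R) : Prop :=
  consistent (agent_upd a s t) /\
  exists l v, agent_upd a s t l v /\ get s l <> v.

(** Runs: [rho t] is the CT-free reduct of R(t); CT = t is implicit. *)
Definition Run := R -> State.

Definition right_val (rho : Run) (t : R) (s : State) : Prop :=
  exists eps, 0 < eps /\ forall u, t < u < t + eps -> rho u = s.

Definition left_val (rho : Run) (t : R) (s : State) : Prop :=
  exists eps, 0 < eps /\ eps <= t /\ forall u, t - eps < u < t -> rho u = s.

Definition pre_run (rho : Run) : Prop :=
  forall tau, 0 < tau ->
    exists (n : nat) (p : nat -> R),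
      p 0%nat = 0 /\ p n = tau /\
      (forall i, (i < n)%nat -> p i < p (S i)) /\
      (forall i, (i < n)%nat -> forall u1 u2,
          p i < u1 < p (S i) -> p i < u2 < p (S i) -> rho u1 = rho u2).

Definition run (rho : Run) : Prop :=
  pre_run rho /\
  (forall t s', 0 <= t -> right_val rho t s' -> s' <> rho t ->
     exists S : agent -> Prop, is_result (exec_upd S (rho t) t) (rho t) s') /\
  (forall t s', 0 < t -> left_val rho t s' -> s' <> rho t ->
     (forall x, Deadline s' x = Deadline (rho t) x) /\
     Dir s' = Dir (rho t) /\ GateStatus s' = GateStatus (rho t)).

Definition fires (rho : Run) (a : agent) (t : R) : Prop :=
  exists s', right_val rho t s' /\ s' <> rho t /\
    exists S : agent -> Prop, S a /\ is_result (exec_upd S (rho t) t) (rho t) s'.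

Definition immediate (rho : Run) (a : agent) : Prop :=
  forall t, 0 <= t -> enabled a (rho t) t -> fires rho a t.

Definition bounded (rho : Run) (a : agent) : Prop :=
  immediate rho a \/
  exists b, 0 < b /\
    ~ (exists t, 0 <= t /\
         (forall u, t < u < t + b -> enabled a (rho u) u) /\
         (forall u, t < u < t + b -> ~ fires rho a u)).

Definition initial (s : State) : Prop :=
  forall x, TrackStatus s x = empty /\ Deadline s x = Inf.

Definition ts_over (rho : Run) (x : Track) (a b : R) (st : TStatus) : Prop :=
  forall u, a <= u < b -> TrackStatus (rho u) x = st.

(** Train Motion for track x; [fin = None] : infinite sequence,
    [fin = Some k] : finite sequence t_0 < ... < t_k. *)
Definition train_motion (rho : Run) (x : Track) : Prop :=
  exists (tm : nat -> R) (fin : option nat),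
    let valid i := match fin with None => True | Some k => (i <= k)%nat end in
    tm 0%nat = 0 /\
    (forall i, valid (S i) -> tm i < tm (S i)) /\
    (forall i, valid (3 * i + 1)%nat ->
        ts_over rho x (tm (3 * i)%nat) (tm (3 * i + 1)%nat) empty) /\
    (forall i, valid (3 * i + 2)%nat ->
        ts_over rho x (tm (3 * i + 1)%nat) (tm (3 * i + 2)%nat) coming /\
        d_min <= tm (3 * i + 2)%nat - tm (3 * i + 1)%nat <= d_max) /\
    (forall i, valid (3 * i + 3)%nat ->
        ts_over rho x (tm (3 * i + 2)%nat) (tm (3 * i + 3)%nat) incrossing) /\
    (forall k, fin = Some k ->
        (exists m, k = (3 * m)%nat) /\
        forall u, tm k <= u -> TrackStatus (rho u) x = empty).

Definition regular_run (rho : Run) : Prop :=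
  run rho /\ initial (rho 0) /\
  (forall x, train_motion rho x) /\
  immediate rho Controller /\
  bounded rho Gate /\
  ~ (exists t, 0 <= t /\ forall u, t < u < t + d_close ->
        Dir (rho u) = dclose_ /\ GateStatus (rho u) = opened) /\
  ~ (exists t, 0 <= t /\ forall u, t < u < t + d_open ->
        Dir (rho u) = dopen_ /\ GateStatus (rho u) = closed).

End Railroad.

(* Main.v *)
Require Import Defs.
From Stdlib Require Import Reals Lra Lia List.
Open Scope R_scope.

Lemma rv_eq (T : Type) (rho : Run T) t s' a st :
  right_val T rho t s' -> t < a -> (forall u, t < u < a -> rho u = st) -> s' = st.
Proof.
  intros [eps [He H]] Ha Hs.
  pose proof (Rmin_l eps (a - t)); pose proof (Rmin_r eps (a - t)).
  assert (0 < Rmin eps (a - t)) by (apply Rmin_pos; lra).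
  rewrite <- (H (t + Rmin eps (a - t) / 2)) by lra.
  apply Hs; lra.
Qed.

Lemma rv_eq_inf (T : Type) (rho : Run T) t s' st :
  right_val T rho t s' -> (forall u, t < u -> rho u = st) -> s' = st.
Proof.
  intros [eps [He H]] Hs.
  rewrite <- (H (t + eps / 2)) by lra. apply Hs; lra.
Qed.

Lemma lv_eq (T : Type) (rho : Run T) t s' a st :
  left_val T rho t s' -> a < t -> (forall u, a < u < t -> rho u = st) -> s' = st.
Proof.
  intros [eps [He [Het H]]] Ha Hs.
  pose proof (Rmin_l eps (t - a)); pose proof (Rmin_r eps (t - a)).
  assert (0 < Rmin eps (t - a)) by (apply Rmin_pos; lra).
  rewrite <- (H (t - Rmin eps (t - a) / 2)) by lra.
  apply Hs; lra.
Qed.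

Lemma rv_mk (T : Type) (rho : Run T) t a st :
  t < a -> (forall u, t < u < a -> rho u = st) -> right_val T rho t st.
Proof.
  intros Ha Hs. exists (a - t). split; [lra|]. intros u Hu. apply Hs; lra.
Qed.

Lemma IR (T : Type) (U : updset T) s s' (f : loc T -> option val) :
  (forall l v, U l v <-> f l = Some v) -> TrackStatus T s' = TrackStatus T s ->
  (forall l v, f l = Some v -> get T s' l = v) ->
  (forall l, f l = None -> get T s' l = get T s l) -> is_result T U s s'.
Proof.
  intros HU HT Hs Hn.
  assert (Hc : consistent T U).
  { intros l v1 v2 h1 h2. apply HU in h1. apply HU in h2. congruence. }
  split; [exact HT|]. split.
  - intros _. split.
    + intros l v h. apply Hs, HU, h.
    + intros l hn. apply Hn. destruct (f l) eqn:E; auto.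
      exfalso. apply (hn v). apply HU. exact E.
  - intros hc. exfalso. exact (hc Hc).
Qed.

Definition PR (T : Type) (rho : Run T) (tau : R) : Prop :=
    exists (n : nat) (p : nat -> R),
      p 0%nat = 0 /\ p n = tau /\
      (forall i, (i < n)%nat -> p i < p (S i)) /\
      (forall i, (i < n)%nat -> forall u1 u2,
          p i < u1 < p (S i) -> p i < u2 < p (S i) -> rho u1 = rho u2).

Definition const_on (T : Type) (rho : Run T) a b :=
  forall u1 u2, a < u1 < b -> a < u2 < b -> rho u1 = rho u2.

Lemma PR0 T rho : PR T rho 0.
Proof. exists 0%nat, (fun _ => 0). repeat split; intros; lia. Qed.

Lemma PR_ext T rho a tau : PR T rho a -> a < tau -> const_on T rho a tau -> PR T rho tau.
Proof.
  intros [n [p [H0 [Hn [Hi Hc]]]]] Ha Hk.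
  exists (S n), (fun i => if Nat.leb i n then p i else tau).
  assert (Hle : forall i, (i <= n)%nat -> Nat.leb i n = true) by (intros; apply Nat.leb_le; lia).
  assert (Hgt : Nat.leb (S n) n = false) by (apply Nat.leb_gt; lia).
  split; [rewrite Hle by lia; auto|]. split; [rewrite Hgt; auto|]. split.
  - intros i Hi'. destruct (Nat.eq_dec i n) as [->|Hne].
    + rewrite Hle, Hgt by lia. lra.
    + rewrite !Hle by lia. apply Hi; lia.
  - intros i Hi' u1 u2. destruct (Nat.eq_dec i n) as [->|Hne].
    + rewrite Hle, Hgt by lia. rewrite Hn. apply Hk.
    + rewrite !Hle by lia. apply Hc; lia.
Qed.

Fixpoint steps T (rho : Run T) (a : R) (l : list R) : Prop :=
  match l with
  | nil => forall tau, a < tau -> const_on T rho a tau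
  | b :: l' => a < b /\ const_on T rho a b /\ steps T rho b l'
  end.

Lemma steps_PR T rho l : forall a, PR T rho a -> steps T rho a l -> forall tau, a < tau -> PR T rho tau.
Proof.
  induction l as [|b l IH]; simpl; intros a Ha Hs tau Ht.
  - apply (PR_ext _ _ a); auto.
  - destruct Hs as [Hab [Hc Hs]].
    destruct (Rle_lt_dec tau b).
    + apply (PR_ext _ _ a); auto. intros u1 u2 h1 h2. apply Hc; lra.
    + apply (IH b); auto. apply (PR_ext _ _ a); auto.
Qed.

Section TheRun.
Variables dc dop dmin dmax t1 e h : R.
Hypothesis Hdc : 0 < dc.
Hypothesis Hcm : dc < dmin.
Hypothesis Hmm : dmin <= dmax.
Hypothesis Hdo : 0 < dop.
Hypothesis Ht1 : 0 < t1.
Hypothesis He : 0 < e < dc.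
Hypothesis Hh : 0 < h < dop.

Definition Dd := t1 + W dc dmin.
Definition Gg := Dd + e.
Definition T2 := t1 + dmax.
Definition T3 := T2 + 1.
Definition Hh' := T3 + h.

Lemma order : 0 < t1 /\ t1 < Dd /\ Dd < Gg /\ Gg < T2 /\ T2 < T3 /\ T3 < Hh'.
Proof. unfold Hh', T3, T2, Gg, Dd, W. lra. Qed.

Ltac ord := pose proof order as [? [? [? [? [? ?]]]]].

Definition mk ts dl d g := mkState unit (fun _ => ts) (fun _ => dl) d g.
Definition S0 := mk empty Inf dopen_ opened.
Definition S1 := mk coming Inf dopen_ opened.
Definition S2 := mk coming (Fin Dd) dopen_ opened.
Definition S3 := mk coming (Fin Dd) dclose_ opened.
Definition S4 := mk coming (Fin Dd) dclose_ closed.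
Definition S5 := mk incrossing (Fin Dd) dclose_ closed.
Definition S6 := mk empty (Fin Dd) dclose_ closed.
Definition S7 := mk empty Inf dopen_ closed.

Definition rho : Run unit := fun u =>
  if Rlt_dec u t1 then S0 else if Rle_dec u t1 then S1
  else if Rle_dec u Dd then S2 else if Rle_dec u Gg then S3
  else if Rlt_dec u T2 then S4 else if Rlt_dec u T3 then S5
  else if Rle_dec u T3 then S6 else if Rle_dec u Hh' then S7 else S0.

Ltac crho := intros; ord; unfold rho;
  repeat match goal with
  | |- context [Rlt_dec ?a ?b] => destruct (Rlt_dec a b)
  | |- context [Rle_dec ?a ?b] => destruct (Rle_dec a b) end;
  first [reflexivity | exfalso; lra].

Lemma rho_0 u : u < t1 -> rho u = S0. Proof. crho. Qed.
Lemma rho_1 : rho t1 = S1. Proof. crho. Qed.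
Lemma rho_2 u : t1 < u <= Dd -> rho u = S2. Proof. crho. Qed.
Lemma rho_3 u : Dd < u <= Gg -> rho u = S3. Proof. crho. Qed.
Lemma rho_4 u : Gg < u < T2 -> rho u = S4. Proof. crho. Qed.
Lemma rho_5 u : T2 <= u < T3 -> rho u = S5. Proof. crho. Qed.
Lemma rho_6 : rho T3 = S6. Proof. crho. Qed.
Lemma rho_7 u : T3 < u <= Hh' -> rho u = S7. Proof. crho. Qed.
Lemma rho_8 u : Hh' < u -> rho u = S0. Proof. crho. Qed.

Lemma rho_1' u : u = t1 -> rho u = S1. Proof. intros ->; apply rho_1. Qed.
Lemma rho_6' u : u = T3 -> rho u = S6. Proof. intros ->; apply rho_6. Qed.

Ltac rr u := first [rewrite (rho_0 u) in * by lra | rewrite (rho_1' u) in * by lra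
  | rewrite (rho_2 u) in * by lra | rewrite (rho_3 u) in * by lra | rewrite (rho_4 u) in * by lra
  | rewrite (rho_5 u) in * by lra | rewrite (rho_6' u) in * by lra | rewrite (rho_7 u) in * by lra
  | rewrite (rho_8 u) in * by lra].

Lemma regions t : t < t1 \/ t = t1 \/ (t1 < t < Dd) \/ t = Dd \/ (Dd < t < Gg) \/ t = Gg \/
  (Gg < t < T2) \/ t = T2 \/ (T2 < t < T3) \/ t = T3 \/ (T3 < t < Hh') \/ t = Hh' \/ Hh' < t.
Proof.
  ord.
  destruct (total_order_T t t1) as [[|]|]; [tauto|tauto|right;right].
  destruct (total_order_T t Dd) as [[|]|]; [left; lra|tauto|right;right].
  destruct (total_order_T t Gg) as [[|]|]; [left; lra|tauto|right;right].
  destruct (total_order_T t T2) as [[|]|]; [left; lra|tauto|right;right].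
  destruct (total_order_T t T3) as [[|]|]; [left; lra|tauto|right;right].
  destruct (total_order_T t Hh') as [[|]|]; [left; lra|tauto|right;right;auto].
Qed.

Lemma pre_run_rho : pre_run unit rho.
Proof.
  intros tau Htau. ord.
  apply (steps_PR _ rho (t1 :: Dd :: Gg :: T2 :: T3 :: Hh' :: nil) 0 (PR0 _ rho)); auto.
  simpl. repeat split; try lra; unfold const_on; intros.
  - rewrite !rho_0 by lra; auto.
  - rewrite !rho_2 by lra; auto.
  - rewrite !rho_3 by lra; auto.
  - rewrite !rho_4 by lra; auto.
  - rewrite !rho_5 by lra; auto.
  - rewrite !rho_7 by lra; auto.
  - rewrite !rho_8 by lra; auto.
Qed.

Definition CU s t := exec_upd unit dc dop dmin (fun a => a = Controller) s t.
Definition GU s t := exec_upd unit dc dop dmin (fun a => a = Gate) s t.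

Lemma IR_t1 : is_result unit (CU (rho t1) t1) (rho t1) S2.
Proof.
  rewrite rho_1.
  apply IR with (f := fun l => match l with LDeadline _ _ => Some (VExt (Fin Dd)) | _ => None end).
  - intros l v; unfold CU, exec_upd, agent_upd, ctrl_upd; split.
    + intros [a [-> Hq]]. simpl in Hq.
      destruct Hq as [[x [-> [_ [_ ->]]]]|[[x [_ [Hd _]]]|[[x [_ [Hd _]]]|[_ [Hd _]]]]];
        try discriminate. reflexivity.
    + destruct l as [x| |]; try discriminate. intros Hq; injection Hq; intros <-.
      exists Controller; split; auto. left. exists x. simpl. auto.
  - reflexivity.
  - intros [x| |] v Hq; try discriminate. injection Hq; intros <-; reflexivity.
  - intros [x| |] Hq; try discriminate; reflexivity.
Qed.

Lemma IR_D : is_result unit (CU (rho Dd) Dd) (rho Dd) S3.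
Proof.
  ord. rewrite (rho_2 Dd) by lra.
  apply IR with (f := fun l => match l with LDir _ => Some (VDir dclose_) | _ => None end).
  - intros l v; unfold CU, exec_upd, agent_upd, ctrl_upd; split.
    + intros [a [-> Hq]]. simpl in Hq.
      destruct Hq as [[x [-> [_ [Hd _]]]]|[[x [-> [_ ->]]]|[[x [_ [Hd _]]]|[_ [Hd _]]]]];
        try discriminate. reflexivity.
    + destruct l as [x| |]; try discriminate. intros Hq; injection Hq; intros <-.
      exists Controller; split; auto. right; left. exists tt. simpl. auto.
  - reflexivity.
  - intros [x| |] v Hq; try discriminate. injection Hq; intros <-; reflexivity.
  - intros [x| |] Hq; try discriminate; reflexivity.
Qed.

Lemma IR_T3 : is_result unit (CU (rho T3) T3) (rho T3) S7.
Proof.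
  rewrite rho_6.
  apply IR with (f := fun l => match l with LDir _ => Some (VDir dopen_)
                                 | LDeadline _ _ => Some (VExt Inf) | _ => None end).
  - intros l v; unfold CU, exec_upd, agent_upd, ctrl_upd; split.
    + intros [a [-> Hq]]. simpl in Hq.
      destruct Hq as [[x [-> [Hd _]]]|[[x [-> [Hd _]]]|[[x [-> [_ [_ ->]]]]|[-> [_ [_ ->]]]]]];
        try discriminate; try reflexivity.
      exfalso. injection Hd. ord. intro. lra.
    + destruct l as [x| |]; try discriminate; intros Hq; injection Hq; intros <-;
      exists Controller; split; auto.
      * right; right; left. exists x. simpl. auto.
      * right; right; right. simpl. repeat split; auto. intro y. left. reflexivity.
  - reflexivity.
  - intros [x| |] v Hq; try discriminate; injection Hq; intros <-; reflexivity.
  - intros [x| |] Hq; try discriminate; reflexivity.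
Qed.

Lemma IR_G : is_result unit (GU (rho Gg) Gg) (rho Gg) S4.
Proof.
  ord. rewrite (rho_3 Gg) by lra.
  apply IR with (f := fun l => match l with LGate _ => Some (VGate closed) | _ => None end).
  - intros l v; unfold GU, exec_upd, agent_upd, gate_upd; split.
    + intros [a [-> Hq]]. simpl in Hq.
      destruct Hq as [[-> [Hd _]]|[-> [_ ->]]]; try discriminate; reflexivity.
    + destruct l as [x| |]; try discriminate; intros Hq; injection Hq; intros <-;
      exists Gate; split; [reflexivity|]; right; auto.
  - reflexivity.
  - intros [x| |] v Hq; try discriminate; injection Hq; intros <-; reflexivity.
  - intros [x| |] Hq; try discriminate; reflexivity.
Qed.

Lemma IR_H : is_result unit (GU (rho Hh') Hh') (rho Hh') S0.
Proof.
  ord. rewrite (rho_7 Hh') by lra.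
  apply IR with (f := fun l => match l with LGate _ => Some (VGate opened) | _ => None end).
  - intros l v; unfold GU, exec_upd, agent_upd, gate_upd; split.
    + intros [a [-> Hq]]. simpl in Hq.
      destruct Hq as [[-> [_ ->]]|[-> [Hd _]]]; try discriminate; reflexivity.
    + destruct l as [x| |]; try discriminate; intros Hq; injection Hq; intros <-;
      exists Gate; split; [reflexivity|]; left; auto.
  - reflexivity.
  - intros [x| |] v Hq; try discriminate; injection Hq; intros <-; reflexivity.
  - intros [x| |] Hq; try discriminate; reflexivity.
Qed.


Ltac regs u := destruct (regions u) as [Hr|[Hr|[Hr|[Hr|[Hr|[Hr|[Hr|[Hr|[Hr|[Hr|[Hr|[Hr|Hr]]]]]]]]]]]].

Ltac handle s' t Hrv a st := assert (s' = st) by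
  (apply (rv_eq _ rho t s' a st Hrv); [lra|intros u' Hu'; rr u'; reflexivity]); subst s'.
Ltac handle_inf s' t Hrv st := assert (s' = st) by
  (apply (rv_eq_inf _ rho t s' st Hrv); intros u' Hu'; rr u'; reflexivity); subst s'.
Ltac same Hne t := exfalso; apply Hne; rr t; reflexivity.

Lemma run_i : forall t s', 0 <= t -> right_val unit rho t s' -> s' <> rho t ->
  exists S, is_result unit (exec_upd unit dc dop dmin S (rho t) t) (rho t) s'.
Proof.
  intros t s' Ht Hrv Hne. ord. regs t.
  - handle s' t Hrv t1 S0. same Hne t.
  - handle s' t Hrv Dd S2. subst t. exists (fun a => a = Controller). exact IR_t1.
  - handle s' t Hrv Dd S2. same Hne t.
  - handle s' t Hrv Gg S3. subst t. exists (fun a => a = Controller). exact IR_D.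
  - handle s' t Hrv Gg S3. same Hne t.
  - handle s' t Hrv T2 S4. subst t. exists (fun a => a = Gate). exact IR_G.
  - handle s' t Hrv T2 S4. same Hne t.
  - handle s' t Hrv T3 S5. same Hne t.
  - handle s' t Hrv T3 S5. same Hne t.
  - handle s' t Hrv Hh' S7. subst t. exists (fun a => a = Controller). exact IR_T3.
  - handle s' t Hrv Hh' S7. same Hne t.
  - handle_inf s' t Hrv S0. subst t. exists (fun a => a = Gate). exact IR_H.
  - handle_inf s' t Hrv S0. same Hne t.
Qed.

Ltac handleL s' t Hlv a st := assert (s' = st) by
  (apply (lv_eq _ rho t s' a st Hlv); [lra|intros u' Hu'; rr u'; reflexivity]); subst s'.
Ltac fin t := rr t; split; [intro; reflexivity| split; reflexivity].

Lemma run_ii : forall t s', 0 < t -> left_val unit rho t s' -> s' <> rho t ->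
     (forall x, Deadline unit s' x = Deadline unit (rho t) x) /\
     Dir unit s' = Dir unit (rho t) /\ GateStatus unit s' = GateStatus unit (rho t).
Proof.
  intros t s' Ht Hlv Hne. ord. regs t.
  - handleL s' t Hlv 0 S0. fin t.
  - handleL s' t Hlv 0 S0. fin t.
  - handleL s' t Hlv t1 S2. fin t.
  - handleL s' t Hlv t1 S2. fin t.
  - handleL s' t Hlv Dd S3. fin t.
  - handleL s' t Hlv Dd S3. fin t.
  - handleL s' t Hlv Gg S4. fin t.
  - handleL s' t Hlv Gg S4. fin t.
  - handleL s' t Hlv T2 S5. fin t.
  - handleL s' t Hlv T2 S5. fin t.
  - handleL s' t Hlv T3 S7. fin t.
  - handleL s' t Hlv T3 S7. fin t.
  - handleL s' t Hlv Hh' S0. fin t.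
Qed.

Lemma noctrl_empty g t : forall l v, ctrl_upd unit dc dop dmin (mk empty Inf dopen_ g) t l v -> False.
Proof.
  intros l v H; unfold ctrl_upd in H; simpl in H.
  destruct H as [[x [_ [Hd _]]]|[[x [_ [Hd _]]]|[[x [_ [_ [Hd _]]]]|[_ [Hd _]]]]];
    try discriminate; contradiction.
Qed.

Lemma noctrl_fin ts d g t : ts <> empty -> t <> Dd -> (d = dopen_ \/ Dd <= t + dop) ->
  forall l v, ctrl_upd unit dc dop dmin (mk ts (Fin Dd) d g) t l v -> False.
Proof.
  intros Hts Htd Hd l v H; unfold ctrl_upd in H; simpl in H.
  destruct H as [[x [_ [_ [Hq _]]]]|[[x [_ [Hq _]]]|[[x [_ [Hq _]]]|[_ [Hq [Hs _]]]]]].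
  - discriminate.
  - injection Hq. intro; apply Htd; auto.
  - contradiction.
  - destruct (Hs tt) as [Hx|Hx]; simpl in Hx; [contradiction|].
    destruct Hd as [Hd|Hd]; [subst; discriminate|lra].
Qed.

Lemma not_enabled s t : (forall l v, ctrl_upd unit dc dop dmin s t l v -> False) ->
  ~ enabled unit dc dop dmin Controller s t.
Proof. intros H [_ [l [v [Hu _]]]]. exact (H l v Hu). Qed.

Ltac neqst := let E := fresh in intro E;
  first [ apply (f_equal (fun s => Deadline unit s tt)) in E; unfold S0, S1, S2, S3, S4, S5, S6, S7, mk in E; simpl in E; discriminate E
        | apply (f_equal (fun s => Dir unit s)) in E; unfold S0, S1, S2, S3, S4, S5, S6, S7, mk in E; simpl in E; discriminate E
        | apply (f_equal (fun s => GateStatus unit s)) in E; unfold S0, S1, S2, S3, S4, S5, S6, S7, mk in E; simpl in E; discriminate E ].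

Ltac ne1 t Hen := exfalso; rr t; revert Hen; apply not_enabled;
  first [ apply noctrl_empty | apply noctrl_fin; [discriminate|lra|first [left; reflexivity|right; lra]]].

Lemma immediate_ctrl : immediate unit dc dop dmin rho Controller.
Proof.
  intros t Ht Hen. ord. regs t.
  - ne1 t Hen.
  - subst t. exists S2. split; [apply (rv_mk _ rho t1 Dd); [lra|intros u Hu; rr u; reflexivity]|].
    split; [rewrite rho_1; neqst|]. exists (fun a => a = Controller). split; [reflexivity|exact IR_t1].
  - ne1 t Hen.
  - subst t. exists S3. split; [apply (rv_mk _ rho Dd Gg); [lra|intros u Hu; rr u; reflexivity]|].
    split; [rr Dd; neqst|]. exists (fun a => a = Controller). split; [reflexivity|exact IR_D].
  - ne1 t Hen.
  - ne1 t Hen.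
  - ne1 t Hen.
  - ne1 t Hen.
  - ne1 t Hen.
  - subst t. exists S7. split; [apply (rv_mk _ rho T3 Hh'); [lra|intros u Hu; rr u; reflexivity]|].
    split; [rewrite rho_6; neqst|]. exists (fun a => a = Controller). split; [reflexivity|exact IR_T3].
  - ne1 t Hen.
  - ne1 t Hen.
  - ne1 t Hen.
Qed.

Lemma bounded_gate : Defs.bounded unit dc dop dmin rho Gate.
Proof.
  right. exists (Hh' + 1). ord. split; [lra|].
  intros [t [Ht [Hen _]]]. specialize (Hen (t + Hh' + 1/2)).
  assert (Hu : t < t + Hh' + 1/2 < t + (Hh' + 1)) by lra.
  apply Hen in Hu. rewrite rho_8 in Hu by lra.
  destruct Hu as [_ [l [v [HU Hne]]]]. unfold agent_upd, gate_upd in HU. simpl in HU.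
  destruct HU as [[-> [_ ->]]|[-> [Hd _]]]; [apply Hne; reflexivity|discriminate].
Qed.

Lemma co_char u : Dir unit (rho u) = dclose_ -> GateStatus unit (rho u) = opened -> Dd < u <= Gg.
Proof. intros H1 H2. ord. regs u; rr u; simpl in H1, H2; try discriminate; lra. Qed.

Lemma oc_char u : Dir unit (rho u) = dopen_ -> GateStatus unit (rho u) = closed -> T3 < u <= Hh'.
Proof. intros H1 H2. ord. regs u; rr u; simpl in H1, H2; try discriminate; lra. Qed.

Lemma no_co : ~ (exists t, 0 <= t /\ forall u, t < u < t + dc ->
        Dir unit (rho u) = dclose_ /\ GateStatus unit (rho u) = opened).
Proof.
  intros [t [Ht H]]. ord.
  destruct (H (t + (dc - e)/4)) as [a1 b1]; [lra|].
  destruct (H (t + dc - (dc - e)/4)) as [a2 b2]; [lra|].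
  apply co_char in a1; auto. apply co_char in a2; auto. unfold Gg in *. lra.
Qed.

Lemma no_oc : ~ (exists t, 0 <= t /\ forall u, t < u < t + dop ->
        Dir unit (rho u) = dopen_ /\ GateStatus unit (rho u) = closed).
Proof.
  intros [t [Ht H]]. ord.
  destruct (H (t + (dop - h)/4)) as [a1 b1]; [lra|].
  destruct (H (t + dop - (dop - h)/4)) as [a2 b2]; [lra|].
  apply oc_char in a1; auto. apply oc_char in a2; auto. unfold Hh' in *. lra.
Qed.

Lemma ts_char u : 0 <= u ->
  (u < t1 -> TrackStatus unit (rho u) tt = empty) /\
  (t1 <= u < T2 -> TrackStatus unit (rho u) tt = coming) /\
  (T2 <= u < T3 -> TrackStatus unit (rho u) tt = incrossing) /\
  (T3 <= u -> TrackStatus unit (rho u) tt = empty).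
Proof.
  intros Hu. ord. regs u; rr u; simpl; repeat split; intros; first [reflexivity | exfalso; lra].
Qed.

Ltac tsc u := let A := fresh in let B := fresh in let C := fresh in let D := fresh in
  destruct (ts_char u) as [A [B [C D]]]; [lra|];
  first [apply A; lra | apply B; lra | apply C; lra | apply D; lra].

Definition tm (i : nat) : R := match i with 0%nat => 0 | 1%nat => t1 | 2%nat => T2 | _ => T3 end.

Lemma tmotion : forall x, train_motion unit dmin dmax rho x.
Proof.
  intros []. exists tm, (Some 3%nat). cbv zeta. ord.
  split; [reflexivity|]. split.
  { intros [|[|[|i]]] Hi; simpl; try lra. lia. }
  split.
  { intros [|i] Hi; [|lia]. simpl. intros u Hu. tsc u. }
  split.
  { intros [|i] Hi; [|lia]. simpl. split.
    - intros u Hu. tsc u.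
    - unfold T2. lra. }
  split.
  { intros [|i] Hi; [|lia]. simpl. intros u Hu. tsc u. }
  intros k Hk. injection Hk; intros <-. split; [exists 1%nat; reflexivity|].
  intros u Hu. simpl in Hu. tsc u.
Qed.

Lemma rr_regular : regular_run unit dc dop dmin dmax rho.
Proof.
  split; [split; [exact pre_run_rho| split; [exact run_i| exact run_ii]]|].
  split; [intros x; rewrite rho_0 by (ord; lra); split; reflexivity|].
  split; [exact tmotion|].
  split; [exact immediate_ctrl|].
  split; [exact bounded_gate|].
  split; [exact no_co|exact no_oc].
Qed.

Lemma gate_closed u : Gg < u <= Hh' -> GateStatus unit (rho u) = closed.
Proof. intros Hu. ord. regs u; rr u; first [reflexivity | exfalso; lra]. Qed.

Lemma not_incr u x : 0 <= u -> u < T2 \/ T3 <= u -> TrackStatus unit (rho u) x <> incrossing.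
Proof. intros H0 H1. destruct x. ord. intro E. destruct (ts_char u H0) as [A [B [C D]]].
  destruct (Rlt_le_dec u t1); [rewrite A in E by lra; discriminate|].
  destruct (Rlt_le_dec u T2); [rewrite B in E by lra; discriminate|].
  rewrite D in E by lra; discriminate. Qed.

End TheRun.


Theorem mainTheorem11 :
  forall d_close d_open d_min d_max : R,
    0 < d_close -> d_close < d_min -> d_min <= d_max -> 0 < d_open ->
    (* (1) *)
    (forall c, 0 <= c < d_open ->
       exists rho : Run unit,
         regular_run unit d_close d_open d_min d_max rho /\
         exists alpha beta,
           0 <= alpha < beta /\
           alpha + c < beta - Delta_close d_close d_min d_max /\
           (forall x u, alpha < u < beta -> TrackStatus unit (rho u) x <> incrossing) /\
           exists u, alpha + c <= u <= beta - Delta_close d_close d_min d_max /\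
                     GateStatus unit (rho u) <> opened) /\
    (* (2) *)
    (forall C, C < Delta_close d_close d_min d_max ->
       exists rho : Run unit,
         regular_run unit d_close d_open d_min d_max rho /\
         exists alpha beta,
           0 <= alpha < beta /\
           alpha + d_open < beta - C /\
           (forall x u, alpha < u < beta -> TrackStatus unit (rho u) x <> incrossing) /\
           exists u, alpha + d_open <= u <= beta - C /\
                     GateStatus unit (rho u) <> opened).
Proof.
  intros dc dop dmin dmax Hdc Hcm Hmm Hdo. split.
  - intros c [Hc0 Hc1].
    exists (rho dc dmin dmax 1 (dc/2) ((c+dop)/2)).
    split; [apply rr_regular; lra|].
    exists (T3 dmax 1), (T3 dmax 1 + c + Delta_close dc dmin dmax + 1).
    unfold Delta_close. unfold T3, T2. split; [lra|]. split; [lra|]. split.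
    + intros x u Hu. apply (not_incr dc dop dmin dmax 1 (dc/2) ((c+dop)/2)); try lra.
      right. unfold T3, T2. lra.
    + exists (1 + dmax + 1 + c). split; [lra|].
      rewrite (gate_closed dc dop dmin dmax 1 (dc/2) ((c+dop)/2)); try discriminate; try lra.
      unfold Gg, Dd, W, Hh', T3, T2. lra.
  - intros C HC. unfold Delta_close in HC.
    set (M := Rmax C 0).
    assert (HM1 : C <= M) by apply Rmax_l.
    assert (HM2 : 0 <= M) by apply Rmax_r.
    assert (HM : M = C \/ M = 0) by (unfold M, Rmax; destruct Rle_dec; auto).
    set (e := Rmin dc (dc + (dmax - dmin) - C) / 2).
    pose proof (Rmin_l dc (dc + (dmax - dmin) - C)).
    pose proof (Rmin_r dc (dc + (dmax - dmin) - C)).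
    assert (0 < Rmin dc (dc + (dmax - dmin) - C)) by (apply Rmin_pos; lra).
    set (t1 := M + dop + 1).
    exists (rho dc dmin dmax t1 e (dop/2)).
    split; [apply rr_regular; unfold e, t1 in *; lra|].
    exists (T2 dmax t1 - M - dop - 1), (T2 dmax t1).
    unfold T2, t1. split; [lra|]. split; [lra|]. split.
    + intros x u Hu. apply (not_incr dc dop dmin dmax t1 e (dop/2)); unfold e, t1 in *; try lra.
      left. unfold T2. lra.
    + exists (M + dop + 1 + dmax - M). split; [lra|].
      rewrite (gate_closed dc dop dmin dmax t1 e (dop/2)); try discriminate; unfold e, t1 in *; try lra.
      unfold Gg, Dd, W, Hh', T3, T2. destruct HM; lra.
Qed.
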